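(* For every integer $i\ge1$, with $N=4^i+1$, there are exactly $2^{i-1}$ pairs $(A,B)$ of antipalindromic numbers with $N=A/B$.
   Context: A positive integer $n$ is antipalindromic if its binary representation $w=w_1\cdots w_L$ (most significant digit first, no leading zeros) has even length $L$ and satisfies $w_i+w_{L+1-i}=1$ for all $i$. *)

(* Defs.v *)
From mathcomp Require Import all_boot.
Set Implicit Arguments. Unset Strict Implicit. Unset Printing Implicit Defensive.

Definition binlen (n : nat) : nat := (trunc_log 2 n).+1.

Definition bit (n j : nat) : nat := odd (n %/ 2 ^ j).

(* n is antipalindromic: binary word w_1...w_L (MSB first) has even length L
   and w_i + w_{L+1-i} = 1 for all i.  Indexing from the LSB with
   j = L - i gives the same family of conditions. *)
Definition antipalindromic (n : nat) : bool :=
  [&& 0 < n, ~~ odd (binlen n) &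
      [forall j : 'I_(binlen n), bit n j + bit n (binlen n - 1 - j) == 1]].

(* Main.v *)
Require Import Defs.
From mathcomp Require Import all_boot zify.

Lemma bit_small n j : n < 2^j -> bit n j = 0.
Proof. by move=> h; rewrite /bit divn_small. Qed.

Lemma bitE q b r j : r < 2^j -> b <= 1 -> bit (q * 2^j.+1 + b * 2^j + r) j = b.
Proof.
move=> hr hb; rewrite /bit.
have -> : q * 2^j.+1 + b * 2^j + r = (q*2 + b) * 2^j + r by rewrite expnS mulnA mulnDl.
rewrite divnMDl ?expn_gt0 // divn_small // addn0 oddD oddM /=.
by rewrite andbF; case: b hb => [|[|]].
Qed.

Lemma bit_low x y k j : j < k -> bit (x * 2^k + y) j = bit y j.
Proof.
move=> hj; rewrite /bit.
have -> : x * 2^k + y = (x * 2^(k-j)) * 2^j + y by rewrite -mulnA -expnD subnK // ltnW.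
rewrite divnMDl ?expn_gt0 // oddD oddM oddX.
have -> : (k - j == 0) = false by lia.
by rewrite /= andbF.
Qed.

Lemma bit_high x y k j : y < 2^k -> k <= j -> bit (x * 2^k + y) j = bit x (j-k).
Proof.
move=> hy hj; rewrite /bit.
have -> : 2^j = 2^k * 2^(j-k) by rewrite -expnD subnKC.
by rewrite divnMA divnMDl ?expn_gt0 // (divn_small hy) addn0.
Qed.

Lemma bit_mod n m j : j < m -> bit (n %% 2^m) j = bit n j.
Proof. by move=> h; rewrite {2}(divn_eq n (2^m)) bit_low. Qed.

Lemma bit_ext k x y : x < 2^k -> y < 2^k -> (forall j, j < k -> bit x j = bit y j) -> x = y.
Proof.
elim: k x y => [|k IH] x y hx hy h.
  by move: hx hy; rewrite expn0 !ltnS !leqn0 => /eqP-> /eqP->.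
have ex : x = (x %/ 2) * 2^1 + odd x by rewrite -modn2 -divn_eq.
have ey : y = (y %/ 2) * 2^1 + odd y by rewrite -modn2 -divn_eq.
have h0 := h 0 (ltn0Sn _).
rewrite ex ey !bit_low // /bit !divn1 in h0.
have hq : x %/ 2 = y %/ 2.
  apply: IH.
  - by rewrite ltn_divLR // -expnSr.
  - by rewrite ltn_divLR // -expnSr.
  move=> j hj; have := h j.+1 hj.
  rewrite {1}ex {1}ey !bit_high //; first by rewrite subSS subn0.
  all: try by rewrite ?expn1 ltnS leq_b1.
rewrite ex ey hq; congr (_ + _).
by case: (odd x) h0; case: (odd y).
Qed.

Lemma antiP n : antipalindromic n <->
  [/\ 0 < n, ~~ odd (binlen n) &
      forall j, j < binlen n -> bit n j + bit n (binlen n - 1 - j) = 1].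
Proof.
split.
  move/and3P=> [h1 h2 /forallP h3]; split=> // j hj.
  exact/eqP/(h3 (Ordinal hj)).
move=> [h1 h2 h3]; apply/and3P; split=> //; apply/forallP=> j.
by apply/eqP; apply: h3; exact: ltn_ord.
Qed.

Lemma binlen_bounds n : 0 < n -> 2^(binlen n).-1 <= n < 2^(binlen n).
Proof. by move=> h; rewrite /binlen /= trunc_logP // trunc_log_ltn. Qed.

Lemma binlen_eq n L : 0 < L -> 2^L.-1 <= n < 2^L -> binlen n = L.
Proof.
move=> hL h; rewrite /binlen (trunc_log_eq (n:=L.-1)) ?prednK //.
Qed.

Lemma bit_modE n j : bit n j = (2^j <= n %% 2^j.+1).
Proof.
have hlt : n %% 2^j.+1 < 2^j.+1 by rewrite ltn_mod expn_gt0.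
rewrite {1}(divn_eq n (2^j.+1)).
case: leqP => h.
- have -> : n %% 2 ^ j.+1 = 1 * 2^j + (n %% 2 ^ j.+1 - 2^j) by rewrite mul1n subnKC.
  rewrite addnA bitE //; move: hlt; rewrite expnS; lia.
- by rewrite -(add0n (n %% _)) -(mul0n (2^j)) addnA bitE.
Qed.

Lemma bit_div n m j : bit (n %/ 2^m) j = bit n (m + j).
Proof. by rewrite /bit -divnMA -expnD. Qed.

Lemma bit_le1 n j : bit n j <= 1.
Proof. by rewrite /bit leq_b1. Qed.

Lemma odd_le1 x : x <= 1 -> (odd x : nat) = x.
Proof. by case: x => [|[|]]. Qed.

Definition crsym m u :=
  u < 2^(2*m) /\ forall j, j < 2*m -> bit u j + bit u (2*m - 1 - j) = 1.

Lemma crsym_step m a c v : a <= 1 -> c <= 1 -> v < 2^(2*m) ->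
  (crsym m.+1 (a * 2^(2*m).+1 + (v * 2^1 + c)) <-> a + c = 1 /\ crsym m v).
Proof.
move=> ha hc hv.
set u := a * _ + _.
have hy : v * 2^1 + c < 2^(2*m).+1.
  move: hv; rewrite expn1 expnS; lia.
have b0 : bit u 0 = c.
  by rewrite /u bit_low // bit_low // /bit divn1 odd_le1.
have btop : bit u (2*m).+1 = a.
  by rewrite /u bit_high // subnn /bit divn1 odd_le1.
have bmid : forall j, 0 < j -> j <= 2*m -> bit u j = bit v (j-1).
  move=> j h1 h2; rewrite /u bit_low // bit_high //.
have e2 : 2 * m.+1 = (2*m).+2 by lia.
rewrite /crsym e2; split.
- move=> [hu h]; split.
    have := h 0 isT; rewrite b0 subn0 /= btop; lia.
  split=> // j hj.
  have := h j.+1 ltac:(lia).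
  rewrite bmid // ?subn1 //= ?bmid; try lia.
  by have -> : (2 * m).+1 - j.+1 - 1 = (2 * m).-1 - j by lia.
- move=> [hac [_ h]]; split.
    move: hv; rewrite /u expn1 !expnS; move: ha hc; clear; nia.
  move=> j hj.
  case: (posnP j) => [->|j0].
    rewrite b0 subn0 /= btop; lia.
  case: (ltnP j (2*m).+1) => j1.
    have ej : (2 * m).+2 - 1 - j = (2*m).+1 - j by lia.
    rewrite ej !bmid; try lia.
    have := h (j-1) ltac:(lia).
    by have -> : 2 * m - 1 - (j - 1) = (2 * m).+1 - j - 1 by lia.
  have -> : j = (2*m).+1 by lia.
  have -> : (2 * m).+2 - 1 - (2 * m).+1 = 0 by lia.
  rewrite b0 btop; lia.
Qed.

Fixpoint crs m : seq nat :=
  if m is m'.+1 then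
    [seq 0 * 2^(2*m').+1 + (v * 2^1 + 1) | v <- crs m'] ++
    [seq 1 * 2^(2*m').+1 + (v * 2^1 + 0) | v <- crs m']
  else [:: 0].

Lemma decomp m u : u < 2^(2*m).+2 -> exists a c v,
  [/\ a <= 1, c <= 1, v < 2^(2*m) & u = a * 2^(2*m).+1 + (v * 2^1 + c)].
Proof.
move=> hu.
exists (u %/ 2^(2*m).+1), ((u %% 2^(2*m).+1) %% 2), ((u %% 2^(2*m).+1) %/ 2).
have hw : u %% 2^(2*m).+1 < 2^(2*m).+1 by rewrite ltn_mod expn_gt0.
split.
- by rewrite -ltnS ltn_divLR ?expn_gt0 // -expnSr.
- by rewrite -ltnS ltn_mod.
- by rewrite ltn_divLR // -expnSr.
- by rewrite expn1 -divn_eq -divn_eq.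
Qed.

Lemma crsP m u : u \in crs m <-> crsym m u.
Proof.
elim: m u => [|m IH] u.
  rewrite /crsym /= inE muln0 expn0; split.
    by move/eqP->; split=> // j.
  by move=> [h _]; apply/eqP; lia.
split.
- rewrite /= mem_cat => /orP [] /mapP [v /IH hv ->];
  apply/crsym_step=> //; by case: hv.
- move=> h.
  have hu : u < 2^(2*m).+2 by case: h; have -> : 2 * m.+1 = (2*m).+2 by lia.
  have [a [c [v [ha hc hv eu]]]] := @decomp m u hu.
  move: h; rewrite eu => /crsym_step - /(_ ha hc hv) [hac /IH hv'].
  rewrite /= mem_cat; apply/orP.
  have [ea|ea] : a = 0 \/ a = 1 by lia.
  all: rewrite ea.
    by left; apply/mapP; exists v => //; have -> : c = 1 by lia.
  by right; apply/mapP; exists v => //; have -> : c = 0 by lia.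
Qed.

Lemma size_crs m : size (crs m) = 2^m.
Proof. by elim: m => [|m IH] //=; rewrite size_cat !size_map IH expnS; lia. Qed.

Lemma uniq_crs m : uniq (crs m).
Proof.
elim: m => [|m IH] //=.
rewrite cat_uniq !map_inj_uniq //; last 2 first.
- by move=> x y; rewrite expn1; lia.
- by move=> x y; rewrite expn1; lia.
rewrite IH andbT /=; apply/hasPn => x /mapP [v _ ->]; apply/negP => /mapP [w _].
rewrite !expn1 expnS; lia.
Qed.

Definition antil i' := [seq 1 * 2^(2*i').+1 + (v * 2^1 + 0) | v <- crs i'].

Lemma antilP i' B : B \in antil i' <-> antipalindromic B /\ binlen B = 2 * i'.+1.
Proof.
have e2 : 2 * i'.+1 = (2*i').+2 by lia.
split.
- move=> /mapP [v /crsP hv ->].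
  have hv' := hv; case: hv' => hvl _.
  have /crsym_step : 1 + 0 = 1 /\ crsym i' v by [].
  move=> /(_ isT isT hvl) [hlt hb].
  set B0 := 1 * _ + _ in hlt hb *.
  have hbl : binlen B0 = 2 * i'.+1.
    apply: binlen_eq; first by lia.
    rewrite e2 /= -e2 hlt andbT /B0; lia.
  split=> //; apply/antiP; rewrite hbl; split=> //.
  + rewrite /B0 expnS; lia.
  + by rewrite oddM.
- move=> [/antiP [h0 hodd hbits] hbl].
  have := @binlen_bounds B h0; rewrite hbl e2 /= => /andP [hlo hhi].
  have [a [c [v [ha hc hv eB]]]] := @decomp i' B hhi.
  have hcr : crsym i'.+1 B.
    split; first by rewrite e2.
    by move=> j hj; have := hbits j; rewrite hbl; apply.
  move: hcr; rewrite eB => /crsym_step - /(_ ha hc hv) [hac /crsP hv'].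
  have ea : a = 1.
    move: hlo; rewrite eB; move: hv; rewrite expn1 expnS; nia.
  apply/mapP; exists v => //; congr (_ * _ + (_ + _)) => //; lia.
Qed.

Lemma size_antil i' : size (antil i') = 2^i'.
Proof. by rewrite size_map size_crs. Qed.

Lemma uniq_antil i' : uniq (antil i').
Proof. by rewrite map_inj_uniq ?uniq_crs // => x y; rewrite expn1; lia. Qed.

Lemma binlen_gt0 n : 0 < binlen n.
Proof. by []. Qed.

Lemma good k B : 0 < k -> antipalindromic B -> binlen B = k ->
  antipalindromic (B * 2^k + B).
Proof.
move=> hk /antiP [h0 hodd hb] hL.
have := @binlen_bounds B h0; rewrite hL => /andP [lo hi].
have hA : binlen (B * 2^k + B) = k + k.
  apply: binlen_eq; first by lia.
  have -> : (k + k).-1 = k.-1 + k by lia.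
  rewrite expnD; apply/andP; split.
    by apply: leq_trans (leq_addr _ _); rewrite leq_mul2r lo orbT.
  rewrite expnD; move: hi; clear; nia.
apply/antiP; rewrite hA; split.
- lia.
- by rewrite addnn odd_double.
move=> j hj.
case: (ltnP j k) => hjk.
  rewrite bit_low // bit_high //; last by lia.
  have -> : k + k - 1 - j - k = binlen B - 1 - j by lia.
  apply: hb; lia.
rewrite bit_high // bit_low; last by lia.
have := hb (j - k) ltac:(lia).
by have -> : binlen B - 1 - (j - k) = k + k - 1 - j by lia.
Qed.

Lemma even_half n : ~~ odd n -> n = n./2 * 2.
Proof.
move=> h; have := odd_double_half n; rewrite (negbTE h) add0n muln2.
by move=> ->.
Qed.

Lemma bad k B : 0 < k -> ~~ odd k -> antipalindromic B ->
  antipalindromic (B * 2^k + B) -> binlen B = k.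
Proof.
move=> hk hek /antiP [h0 hoddL hb] /antiP [hA0 hoddM ha].
move: hb ha hoddL hoddM hA0.
set A := B * 2^k + B.
have := @binlen_bounds B h0.
have := @binlen_gt0 B.
set L := binlen B; set M := binlen A.
move=> hL0 /andP [lo hi] hb ha hoddL hoddM hA0.
have := @binlen_bounds A hA0; rewrite -/M => /andP [loA hiA].
have hAge : 2^(L+k).-1 <= A.
  have -> : (L + k).-1 = L.-1 + k by lia.
  by rewrite expnD; apply: leq_trans (leq_addr _ _); rewrite leq_mul2r lo orbT.
have hlow : forall j, j < k -> bit A j = bit B j.
  by move=> j hj; rewrite /A bit_low.
case: (ltngtP L k) => [hLk | hkL | //].
-
  have hM : M = L + k.
    apply: binlen_eq; first by lia.
    rewrite hAge /= /A expnD.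
    have : 2^L * 2 <= 2^k by rewrite -expnSr leq_exp2l.
    move: hi; clear; nia.
  have := ha L ltac:(lia).
  rewrite hM hlow // bit_small //.
  have -> : L + k - 1 - L = k.-1 by lia.
  rewrite hlow; last by lia.
  rewrite bit_small //; apply: leq_trans hi _; rewrite leq_exp2l //; lia.
-
  have hM : M = L + k.
    have h1 : (L + k).-1 < M.
      by rewrite -(@ltn_exp2l 2) //; apply: leq_ltn_trans hAge hiA.
    have h2 : M.-1 < (L + k).+1.
      rewrite -(@ltn_exp2l 2) //; apply: leq_ltn_trans loA _.
      rewrite /A expnS expnD; move: hi; clear; nia.
    have := @even_half M hoddM; have := @even_half L hoddL; have := @even_half k hek.
    lia.
  have hBtop : bit B L.-1 = 1.
    by rewrite bit_modE prednK // modn_small // lo.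
  have hB0 : bit B 0 = 0.
    have := hb 0 hL0; rewrite subn0 subn1 hBtop; lia.
  have hAk : bit A k = bit B k.
    rewrite /bit /A divnMDl ?expn_gt0 // oddD.
    move: hB0; rewrite /bit divn1 => /eqP; rewrite eqb0 => /negbTE ->.
    by [].
  have htop : forall j, j < k -> bit A (M - 1 - j) = bit B (L - 1 - j).
    move=> j hj; have := ha j ltac:(lia); have := hb j ltac:(lia).
    rewrite hlow //; lia.
  have hdiv : A %/ 2^L = B %/ 2^(L-k).
    apply: (@bit_ext k).
    - by rewrite ltn_divLR ?expn_gt0 // -expnD addnC -hM.
    - by rewrite ltn_divLR ?expn_gt0 // -expnD subnKC // ltnW.
    move=> j hj; rewrite !bit_div.
    have := htop (k - 1 - j) ltac:(lia).
    have -> : M - 1 - (k - 1 - j) = L + j by lia.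
    by have -> : L - 1 - (k - 1 - j) = L - k + j by lia.
  set T := B %% 2^(L-k); set D := B %/ 2^(L-k).
  have hA1 : A = D * 2^L + (T * 2^k + B).
    rewrite /A {1}(divn_eq B (2^(L-k))) mulnDl -mulnA -expnD subnK; last by lia.
    by rewrite addnA.
  have hA2 : A = D * 2^L + A %% 2^L by rewrite {1}(divn_eq A (2^L)) hdiv.
  have hmod : A %% 2^L = T * 2^k + B by move: hA1 hA2; clear; lia.
  have hlt : T * 2^k + B < 2^L by rewrite -hmod ltn_mod expn_gt0.
  have hAL1 : bit A L.-1 = 1.
    by rewrite bit_modE prednK // hmod (leq_trans lo (leq_addl _ _)).
  have hkM : k < M by rewrite hM; move: hkL; clear; lia.
  have hkL' : k < L by [].
  have hAk0 : bit A k = 0.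
    have := ha k hkM.
    have -> : M - 1 - k = L.-1 by move: hM hkL; clear; lia.
    by rewrite hAL1; clear; lia.
  have hBk' : bit B (L - 1 - k) = 1.
    by have := hb k hkL'; rewrite -hAk hAk0; clear; lia.
  have hT : bit T (L - k - 1) = 1.
    rewrite /T bit_mod; last by move: hkL; clear; lia.
    by have -> : L - k - 1 = L - 1 - k by move: hkL; clear; lia.
  have hTge : 2^(L - k - 1) <= T.
    by rewrite leqNgt; apply/negP => /bit_small h; move: h hT; clear; lia.
  have h3 : 2^(L.-1) <= T * 2^k.
    have -> : L.-1 = (L - k - 1) + k by move: hkL; clear; lia.
    by rewrite expnD leq_mul2r hTge orbT.
  have h4 : 2^L = 2 * 2^(L.-1) by rewrite -expnS prednK.
  move: h3 h4 hlt lo; clear; lia.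
Qed.

Theorem theorem21 (i : nat) (hi : 1 <= i) :
  exists s : seq (nat * nat),
    [/\ uniq s,
        (forall A B : nat,
           (A, B) \in s <->
           [/\ antipalindromic A, antipalindromic B & A = (4 ^ i + 1) * B])
      & size s = 2 ^ (i - 1)].
Proof.
case: i hi => [//|i'] _.
have e4 : 4 ^ i'.+1 = 2 ^ (2 * i'.+1) by rewrite expnM.
exists [seq ((4^i'.+1 + 1) * B, B) | B <- antil i'].
split.
- by rewrite map_inj_uniq ?uniq_antil // => x y [].
- move=> A B; split.
  + move=> /mapP [B' hB' [-> ->]].
    have [ha hl] := (antilP i' B').1 hB'.
    split=> //; rewrite e4 mulnDl mul1n mulnC; apply: good => //; lia.
  + move=> [ha hb eA]; apply/mapP; exists B => //; last by rewrite eA.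
    apply/antilP; split=> //.
    move: ha; rewrite eA e4 mulnDl mul1n mulnC => ha.
    apply: bad => //; first by lia.
- by rewrite size_map size_antil subn1.
Qed.
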